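(* Let $\Delta,\bar\Delta\in\mathbb{C}^*$ and let $h(\partial,\lambda)=\sum_{i=0}^m a_i\partial^{m-i}\lambda^i\in\mathbb{C}[\partial,\lambda]$ be a nonzero homogeneous polynomial of degree $m$ satisfying $$\big(\tfrac12\lambda-\mu\big)h(\partial,\lambda+\mu)=(\partial+\bar\Delta\lambda)h(\partial+\lambda,\mu)-(\partial+\mu+\Delta\lambda)h(\partial,\mu).$$ Then $a_0\neq0$, $m\in\{0,1,2\}$, and exactly one of the following holds: (i) $\Delta-\bar\Delta=-\tfrac12$ and $h(\partial,\lambda)=a_0$; (ii) $\Delta-\bar\Delta=\tfrac12$ and $h(\partial,\lambda)=a_0(\partial+2\bar\Delta\lambda)$; (iii) $(\Delta,\bar\Delta)=(1,-\tfrac12)$ and $h(\partial,\lambda)=a_0(\partial^2-\lambda^2)$. *)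

(* Defs.v *)
(* The base field C is an arbitrary numClosedFieldType
   (algebraically closed field of characteristic 0 with a norm), which
   includes the complex numbers. *)
From HB Require Import structures.
From mathcomp Require Import all_boot all_order all_algebra.
Set Implicit Arguments. Unset Strict Implicit. Unset Printing Implicit Defensive.
Import Order.TTheory GRing.Theory Num.Theory.
Local Open Scope ring_scope.

Definition hpoly {C : numClosedFieldType} (m : nat) (a : nat -> C) (d l : C) : C :=
  \sum_(i < m.+1) a i * d ^+ (m - i) * l ^+ i.

Definition exactly_one3 (P Q R : Prop) : Prop :=
  (P /\ ~ Q /\ ~ R) \/ (~ P /\ Q /\ ~ R) \/ (~ P /\ ~ Q /\ R).

(* Main.v *)
Require Import Defs.
From HB Require Import structures.
From mathcomp Require Import all_boot all_order all_algebra.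
From mathcomp Require Import ring zify.
Import Order.TTheory GRing.Theory Num.Theory.
Local Open Scope ring_scope.

Lemma h_x0 (C : numClosedFieldType) m (a : nat -> C) x : hpoly m a x 0 = a 0%N * x ^+ m.
Proof.
rewrite /hpoly big_ord_recl /= expr0 mulr1 subn0 big1 ?addr0 // => i _.
by rewrite expr0n /= mulr0.
Qed.

Lemma h_0y (C : numClosedFieldType) m (a : nat -> C) y : hpoly m a 0 y = a m * y ^+ m.
Proof.
rewrite /hpoly big_ord_recr /= subnn expr0 mulr1 big1 ?add0r // => i _.
rewrite expr0n subn_eq0 leqNgt ltn_ord /= mulr0 mul0r //.
Qed.

Lemma lc1 {F : fieldType} (k : F) {x A B : F} : A = B -> x = k * (A - B) -> x = 0.
Proof. by move=> -> ->; rewrite subrr mulr0. Qed.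

Lemma lc2 {R : comRingType} (c1 c2 : R) {x e1 e2 : R} : e1 = 0 -> e2 = 0 -> x = c1 * e1 + c2 * e2 -> x = 0.
Proof. by move=> -> -> ->; rewrite !mulr0 addr0. Qed.

Lemma solve1 {F : fieldType} {c x r : F} : c != 0 -> c * x = r -> x = r / c.
Proof. by move=> c0 <-; rewrite [c * x]mulrC mulfK. Qed.

Lemma two_nz (C : numClosedFieldType) : (2 : C) != 0.
Proof. by rewrite pnatr_eq0. Qed.

Lemma ex3_1 (P Q R : Prop) : P -> ~ Q -> ~ R -> exactly_one3 P Q R.
Proof. by move=> *; left. Qed.
Lemma ex3_2 (P Q R : Prop) : ~ P -> Q -> ~ R -> exactly_one3 P Q R.
Proof. by move=> *; right; left. Qed.
Lemma ex3_3 (P Q R : Prop) : ~ P -> ~ Q -> R -> exactly_one3 P Q R.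
Proof. by move=> *; right; right. Qed.

Lemma n12 (C : numClosedFieldType) : (2^-1 : C) <> - 2^-1.
Proof.
move/eqP; rewrite -subr_eq0 (_ : 2^-1 - - 2^-1 = 1) ?oner_eq0 //.
by field; rewrite ?two_nz.
Qed.
Lemma n32a (C : numClosedFieldType) : (1 - - 2^-1 : C) <> - 2^-1.
Proof.
move/eqP; rewrite -subr_eq0 (_ : 1 - - 2^-1 - - 2^-1 = 2) ?(negbTE (two_nz C)) //.
by field; rewrite ?two_nz.
Qed.
Lemma n32b (C : numClosedFieldType) : (1 - - 2^-1 : C) <> 2^-1.
Proof.
move/eqP; rewrite -subr_eq0 (_ : 1 - - 2^-1 - 2^-1 = 1) ?oner_eq0 //.
by field; rewrite ?two_nz.
Qed.

Theorem lemma3p6 (C : numClosedFieldType) (D Db : C) (m : nat) (a : nat -> C) :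
  D != 0 -> Db != 0 ->
  (exists i : nat, (i <= m)%N /\ a i != 0) ->
  (forall d l mu : C,
      (2^-1 * l - mu) * hpoly m a d (l + mu)
      = (d + Db * l) * hpoly m a (d + l) mu - (d + mu + D * l) * hpoly m a d mu) ->
  a 0%N != 0 /\ (m <= 2)%N /\
  exactly_one3
    (D - Db = - 2^-1 /\ forall d l : C, hpoly m a d l = a 0%N)
    (D - Db = 2^-1 /\ forall d l : C, hpoly m a d l = a 0%N * (d + 2 * Db * l))
    ((D, Db) = (1, - 2^-1) /\ forall d l : C, hpoly m a d l = a 0%N * (d ^+ 2 - l ^+ 2)).
Proof.
move=> D0 Db0 [i [im ai]] H.
have t0 := two_nz C.
have hE1 x y : 2^-1 * y * hpoly m a x y
    = a 0%N * ((x + Db * y) * (x + y) ^+ m - (x + D * y) * x ^+ m).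
  by have := H x y 0; rewrite !addr0 subr0 !h_x0 => ->; ring.
have a0nz : a 0%N != 0.
  apply/negP => /eqP a00; move/negP: ai; apply.
  pose p := \poly_(j < m.+1) a j.
  have hp y : y != 0 -> p.[y] = 0.
    move=> y0; rewrite horner_poly.
    have := hE1 1 y; rewrite a00 mul0r => /eqP; rewrite mulf_eq0 mulf_eq0 invr_eq0 (negbTE t0) (negbTE y0) /=.
    rewrite /hpoly => /eqP E; rewrite -[RHS]E; apply: eq_bigr => j _; by rewrite expr1n mulr1.
  have p0 : p = 0.
    apply/eqP; apply: contraT => pn0.
    have := max_poly_roots pn0 (rs := [seq (j.+1)%:R | j <- iota 0 (size p)]).
    rewrite size_map size_iota ltnn; apply.
      apply/allP => z /mapP [j _ ->]; apply/rootP; apply: hp; by rewrite pnatr_eq0.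
    rewrite map_inj_uniq ?iota_uniq // => j k /eqP; by rewrite eqr_nat => /eqP [].
    apply/eqP; have := coef_poly (m.+1) a i; rewrite -/p p0 coef0 ltnS im => <- //.
have [m0|mpos] := posnP m.
  subst m.
  have hc d l : hpoly 0 a d l = a 0%N by rewrite /hpoly big_ord1 /= !expr0 !mulr1.
  have e := hE1 0 1; rewrite hc !expr0 in e.
  have hDD : D - Db = - 2^-1.
    apply/eqP; rewrite -subr_eq0; apply/eqP; apply: (lc1 (1 / a 0%N) e).
    by field; rewrite ?a0nz.
  split; first done; split; first done.
  apply: ex3_1.
  - by split.
  - by case; rewrite hDD => /esym E _; exact: n12 E.
  - by case=> E _; case: E => hD hDb; move: hDD; rewrite hD hDb; apply: n32a.
have p0 : 0 ^+ m = 0 :> C by rewrite expr0n eqn0Ngt mpos.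
have t1 : (1 + 1 : C) != 0 by rewrite -mulr2n pnatr_eq0.
have n1 : (-1 : C) != 0 by rewrite oppr_eq0 oner_eq0.
have amE : a m = 2 * Db * a 0%N.
  have e := hE1 0 1; rewrite h_0y !add0r !expr1n p0 in e.
  apply/eqP; rewrite -subr_eq0; apply/eqP; apply: (lc1 2 e).
  by field.
have hval x y : y != 0 -> hpoly m a x y
    = a 0%N * ((x + Db * y) * (x + y) ^+ m - (x + D * y) * x ^+ m) / (2^-1 * y).
  by move=> y0; apply: solve1 (hE1 x y); rewrite mulf_eq0 invr_eq0 negb_or t0.
have f1 : (1 - D) * (1 + (-1) ^+ m) = 0.
  have e := H 0 1 (-1).
  rewrite addrN !add0r !h_0y p0 (hval 1 (-1)) // addrN p0 expr1n amE in e.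
  apply: (lc1 (- 1 / (2 * Db * a 0%N)) e).
  by field; rewrite ?a0nz ?Db0 ?D0.
have f3 : (1 + 1) ^+ m + 2 * (1 + Db) * (1 + 1) ^+ m - 4 * (1 + D) = 0.
  have e := H 0 1 1.
  rewrite !h_0y !add0r (hval 1 1) ?oner_eq0 // !expr1n amE in e.
  apply: (lc1 (- 1 / (Db * a 0%N)) e).
  by field; rewrite ?a0nz ?Db0 ?D0.
have f4 : 2 + 2 * (2 - Db) - 2 * (2 - D) * (1 + 1) ^+ m + (2 * D - 1) * (-1) ^+ m = 0.
  have e := H 0 (1 + 1) (-1).
  rewrite !h_0y !add0r (hval (1 + 1) (-1)) // !addrK !expr1n amE in e.
  apply: (lc1 (1 / (2 * Db * a 0%N)) e).
  by field; rewrite ?a0nz ?Db0 ?D0.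
have f2 : 2^-1 * ((2 * Db - 1) - (2 * D - 1) * (-1) ^+ m) + 2 * (Db - 1) * Db
           + 2 * D * (D - 1) * (-1) ^+ m = 0.
  have e := H (-1) 1 1.
  rewrite (hval (-1) (1 + 1)) // (hval (-1) 1) ?oner_eq0 // !addNr addKr h_0y !add0r p0 !expr1n amE in e.
  apply: (lc1 (- 1 / a 0%N) e).
  by field; rewrite ?a0nz ?Db0 ?D0.
set s := (-1) ^+ m in f1 f2 f4.
set T := (1 + 1) ^+ m in f3 f4.
have hT : T = (2 ^ m)%:R by rewrite /T natrX mulr2n.
have hTk k : T = k%:R -> (2 ^ m = k)%N by rewrite hT => /eqP; rewrite eqr_nat => /eqP.
have m2le : (2 <= 2 ^ m)%N by rewrite -{1}(expn1 2) leq_exp2l.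
case/boolP: (odd m) => om.
  have hs : s = -1 by rewrite /s -signr_odd om expr1.
  have hq : (D + Db - 1) * (1 + 2 * (Db - D)) = 0.
    rewrite hs in f2; apply: (lc2 1 0 f2 f2); by field.
  have [m1|mn1] := eqVneq m 1%N.
    subst m.
    have hDD : D - Db = 2^-1.
      rewrite /T expr1 in f3.
      apply/eqP; rewrite -subr_eq0; apply/eqP; apply: (lc2 (- 4^-1) 0 f3 f3).
      by field.
    split; first done; split; first done.
    apply: ex3_2.
    - by case; rewrite hDD => E _; exact: n12 E.
    - split; first done.
      by move=> d l; rewrite /hpoly !big_ord_recr big_ord0 /= amE; ring.
    - by case=> E _; case: E => hD hDb; move: hDD; rewrite hD hDb; apply: n32b.
  have T2 : T - 2 != 0.
    apply/eqP => E; have : T = 2%:R by apply/eqP; rewrite -subr_eq0 E.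
    move/hTk; rewrite -{2}(expn1 2) => /eqP; rewrite eqn_exp2l // => /eqP.
    by move/eqP: mn1.
  have T5 : T - 5 != 0.
    apply/eqP => E; have : T = 5%:R by apply/eqP; rewrite -subr_eq0 E.
    move/hTk => /(congr1 odd); rewrite oddX /=.
    by rewrite eqn0Ngt mpos.
  rewrite hs in f4.
  move/eqP: hq; rewrite mulf_eq0 => /orP [/eqP u0 | /eqP g0].
    have hD : D = 1 - Db by apply/eqP; rewrite -subr_eq0; apply/eqP; apply: (lc2 1 0 u0 u0); ring.
    rewrite hD in f3 f4.
    have : (T - 2) * (T - 5) = 0 by apply: (lc2 T (T + 2) f3 f4); ring.
    by move/eqP; rewrite mulf_eq0 (negbTE T2) (negbTE T5).
  have : (T - 2) * (3 + 2 * Db) = 0 by apply: (lc2 1 (-2) f3 g0); ring.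
  move/eqP; rewrite mulf_eq0 (negbTE T2) /= => /eqP h3.
  have hDb : Db = - (3 / 2).
    apply/eqP; rewrite -subr_eq0; apply/eqP; apply: (lc2 (2^-1) 0 h3 h3); by field.
  have hD : D = -1.
    apply/eqP; rewrite -subr_eq0; apply/eqP; apply: (lc2 (- 2^-1) 0 g0 g0); rewrite hDb; by field.
  rewrite hD hDb in f4.
  case/eqP: T2; apply: (lc2 (- 6^-1) 0 f4 f4); by field.
have hs : s = 1 by rewrite /s -signr_odd (negbTE om) expr0.
have hD : D = 1.
  move/eqP: f1; rewrite hs mulf_eq0 (negbTE t1) orbF subr_eq0 => /eqP <- //.
have hq : (Db - 1) * (1 + 2 * Db) = 0.
  rewrite hD hs in f2; apply: (lc2 1 0 f2 f2); by field.
move/eqP: hq; rewrite mulf_eq0 => /orP [/eqP h1 | /eqP h2].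
  have hDb : Db = 1 by apply/eqP; rewrite -subr_eq0; apply/eqP.
  have : ((5 * 2 ^ m)%:R = 8%:R :> C).
    rewrite natrM -hT; apply/eqP; rewrite -subr_eq0; apply/eqP.
    rewrite hD hDb in f3; apply: (lc2 1 0 f3 f3); ring.
  move/eqP; rewrite eqr_nat => /eqP; lia.
have hDb : Db = - 2^-1.
  apply/eqP; rewrite -subr_eq0; apply/eqP; apply: (lc2 (2^-1) 0 h2 h2); by field.
have m2 : m = 2%N.
  have : T = 4%:R.
    apply/eqP; rewrite -subr_eq0; apply/eqP.
    rewrite hD hDb in f3; apply: (lc2 (2^-1) 0 f3 f3); by field.
  move/hTk => /eqP; rewrite (_ : 4%N = 2 ^ 2)%N // eqn_exp2l // => /eqP //.
subst m.
have e := hE1 1 1.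
rewrite /hpoly !big_ord_recr big_ord0 /= amE hD hDb in e.
have ha1 : a 1%N = 0.
  apply: (lc1 2 e); by field.
split; first done; split; first done.
apply: ex3_3.
- move=> [E _]; move: E; rewrite hD hDb => E; exact: n32a E.
- move=> [E _]; move: E; rewrite hD hDb => E; exact: n32b E.
- split; first by rewrite hD hDb.
  move=> d l; rewrite /hpoly !big_ord_recr big_ord0 /= amE hDb ha1; by field.
Qed.
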